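(* Let $p$ be a prime and $M\in\mathrm{GL}(2,\mathbb{F}_p)$. Then $M$ is reversible within $\mathrm{GL}(2,\mathbb{F}_p)$ if and only if $M^2=\mathbb{1}$ or $\det(M)=1$. Whenever $M^2=\mathbb{1}$, one has $\mathcal{R}(M)=\mathcal{S}(M)$. If $\det(M)=1$ and $M^2\neq\mathbb{1}$, there exists an involutory reversor, and $\mathcal{R}(M)=\mathcal{S}(M)\rtimes C_2$.
   Context: $M$ is reversible within a group $\mathcal{G}$ if there is $G\in\mathcal{G}$ with $GMG^{-1}=M^{-1}$; such $G$ is a reversor. With $\mathcal{G}=\mathrm{GL}(2,\mathbb{F}_p)$: $\mathcal{S}(M)=\{G\in\mathcal{G}: GMG^{-1}=M\}$ (symmetry group) and $\mathcal{R}(M)=\{G\in\mathcal{G}: GMG^{-1}=M^{\pm1}\}$ (reversing symmetry group). $C_2$ is the cyclic group of order 2 (generated by an involutory reversor). *)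

(* Defs.v *)
From mathcomp Require Import all_boot all_order all_algebra all_fingroup all_solvable.
Set Implicit Arguments. Unset Strict Implicit. Unset Printing Implicit Defensive.
Import GroupScope.

Definition reversor {gT : finGroupType} (M G : gT) : Prop := G * M * G^-1 = M^-1.
Definition reversible {gT : finGroupType} (M : gT) : Prop := exists G : gT, reversor M G.

Definition symgrp {gT : finGroupType} (M : gT) : {set gT} :=
  [set G : gT | G * M * G^-1 == M].
Definition revsymgrp {gT : finGroupType} (M : gT) : {set gT} :=
  [set G : gT | (G * M * G^-1 == M) || (G * M * G^-1 == M^-1)].

(* Main.v *)
Require Import Defs.
From mathcomp Require Import all_boot all_order all_algebra all_fingroup all_solvable.
From mathcomp Require Import ring.
Set Implicit Arguments. Unset Strict Implicit. Unset Printing Implicit Defensive.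
Import GroupScope.

Lemma revE (gT : finGroupType) (M G : gT) : reversor M G <-> M * G * M = G.
Proof.
rewrite /reversor; split=> h.
  have -> : M * G * M = M * (G * M * G^-1) * G by rewrite !mulgA mulgKV.
  by rewrite h mulgV mul1g.
by move: (congr1 (fun X => M^-1 * X * G^-1) h); rewrite /= !mulgA mulVg mul1g mulgK.
Qed.

Lemma symE (gT : finGroupType) (M : gT) : symgrp M = 'C[M].
Proof.
apply/setP=> H; rewrite cent1E inE.
exact: (canF_eq (mulgKV H)).
Qed.

Lemma revgrp (gT : finGroupType) (M G : gT) :
  reversor M G -> G ^+ 2 = 1 -> M ^+ 2 != 1 ->
  symgrp M ><| <[G]> = revsymgrp M.
Proof.
move=> hr hG2 hM2.
have GV : G^-1 = G by apply/eqP; rewrite eq_invg_mul -expg2 hG2.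
have MG : M ^ G = M^-1 by rewrite conjgE -hr GV mulgA.

have GnC : G \notin 'C[M].
  apply/negP; rewrite cent1E => /eqP h; move: hr.
  rewrite /reversor h mulgK => h2; case/eqP: hM2.
  by rewrite expg2 {2}h2 mulgV.
have CV : forall x, (x \in 'C[M^-1]) = (x \in 'C[M]).
  move=> x; apply/idP/idP => /cent1P h; apply/cent1P.
    by rewrite -[M]invgK; apply: commuteV.
  exact: commuteV.
rewrite (symE M) sdprodE.
- apply/setP=> H; rewrite [H \in revsymgrp M]inE; apply/mulsgP/idP.
  + case=> c g hc /cycleP [k ->] ->{H}.
    rewrite -(expg_mod k hG2).
    have : k %% 2 < 2 by rewrite ltn_mod.
    case: (k %% 2) => [|[|//]] _.
      by rewrite expg0 mulg1; move: hc; rewrite cent1E => /eqP ->; rewrite mulgK eqxx.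
    rewrite expg1 invMg.
    have -> : c*G*M*(G^-1*c^-1) = c*(G*M*G^-1)*c^-1 by rewrite !mulgA.
    rewrite hr; move: hc; rewrite -CV cent1E => /eqP ->.
    by rewrite mulgK eqxx orbT.
  + case/orP=> /eqP h.
      exists H 1; rewrite ?mulg1 ?group1 //.
      suff : H \in symgrp M by rewrite symE; apply.
      by rewrite inE h.
    exists (H * G^-1) G; rewrite ?cycle_id ?mulgKV //.
    suff : H * G^-1 \in symgrp M by rewrite symE; apply.
    rewrite inE invMg invgK.
    have -> : H*G^-1*M*(G*H^-1) = H*(G^-1*(M*G))*H^-1 by rewrite !mulgA.
    rewrite -conjgE MG.
    have -> : H*M^-1*H^-1 = (H*M*H^-1)^-1 by rewrite !invMg invgK !mulgA.
    by rewrite h invgK.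
- by rewrite cycle_subG; apply/normP; rewrite -cent1J MG; apply/setP=> x; rewrite CV.
- apply/trivgP/subsetP=> x; rewrite inE => /andP [hx /cycleP [k hk]].
  move: hx; rewrite hk -(expg_mod k hG2).
  have : k %% 2 < 2 by rewrite ltn_mod.
  case: (k %% 2) => [|[|//]] _; first by rewrite expg0 inE.
  by rewrite expg1 (negbTE GnC).
Qed.

Section M2.
Import GRing.Theory.
Local Open Scope ring_scope.

Variable F : fieldType.
Notation o0 := (@ord0 1).
Notation o1 := (@ord_max 1).

Lemma ord2P (i : 'I_2) : i = o0 \/ i = o1.
Proof. by case: i => [[|[|//]] Hi]; [left|right]; apply/val_inj. Qed.

Lemma eq2 (A B : 'M[F]_2) : A o0 o0 = B o0 o0 -> A o0 o1 = B o0 o1 ->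
  A o1 o0 = B o1 o0 -> A o1 o1 = B o1 o1 -> A = B.
Proof.
move=> h1 h2 h3 h4; apply/matrixP=> i j.
by case: (ord2P i) => ->; case: (ord2P j) => ->.
Qed.

Lemma mul2E (A B : 'M[F]_2) i j : (A *m B) i j = A i o0 * B o0 j + A i o1 * B o1 j.
Proof.
rewrite mxE !big_ord_recl big_ord0 addr0.
by congr (_ * _ + _ * _); congr (_ _ _); apply/val_inj.
Qed.

Lemma lift01 (k : 'I_1) : lift o0 k = o1.
Proof. by apply/val_inj; case: k => [[]]. Qed.
Lemma lift10 (k : 'I_1) : lift o1 k = o0.
Proof. by apply/val_inj; case: k => [[]]. Qed.

Lemma det2 (A : 'M[F]_2) : \det A = A o0 o0 * A o1 o1 - A o0 o1 * A o1 o0.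
Proof.
rewrite (expand_det_row _ ord0) !big_ord_recl big_ord0 addr0 /cofactor !det_mx11 !mxE /=.
rewrite !lift01 !lift10 /= expr0 expr1; ring.
Qed.

Lemma tr2 (A : 'M[F]_2) : \tr A = A o0 o0 + A o1 o1.
Proof.
rewrite /mxtrace !big_ord_recl big_ord0 addr0.
by rewrite lift01.
Qed.

Section Fwd.
Variables M G : 'M[F]_2.
Local Notation a := (M o0 o0). Local Notation b := (M o0 o1).
Local Notation c := (M o1 o0). Local Notation d := (M o1 o1).
Local Notation x := (G o0 o0). Local Notation y := (G o0 o1).
Local Notation z := (G o1 o0). Local Notation w := (G o1 o1).

Lemma fwd : \det G != 0 -> M *m G *m M = G -> M *m M = 1%:M \/ \det M = 1.
Proof.
move=> hG h.
have hd : \det M * \det M = 1.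
  have := congr1 determinant h; rewrite !det_mulmx => e.
  apply/eqP; rewrite -subr_eq0; apply/eqP.
  apply: (mulIf hG); rewrite mul0r mulrBl mul1r -{2}e; ring.
have key : \det G * (\det M - 1) * (a + d) =
   (w*d+y*c)*((M *m G *m M) o0 o0 - x) + (-(w*b)-y*a)*((M *m G *m M) o1 o0 - z)
 + (-(z*d)-x*c)*((M *m G *m M) o0 o1 - y) + (z*b+x*a)*((M *m G *m M) o1 o1 - w).
  rewrite !det2 !mul2E; ring.
rewrite h !subrr !mulr0 !addr0 in key.
case: (eqVneq (\det M) 1) => hd1; first by right.
left.
have htr : a + d = 0.
  by move/eqP: key; rewrite !mulf_eq0 (negbTE hG) subr_eq0 (negbTE hd1) /= => /eqP.
have hd2 : \det M + 1 = 0.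
  have : (\det M - 1) * (\det M + 1) = 0 by rewrite mulrBl mulrDr hd; ring.
  by move/eqP; rewrite mulf_eq0 subr_eq0 (negbTE hd1) /= => /eqP.
rewrite det2 in hd2.
apply: eq2; rewrite !mul2E !mxE /=.
- have -> : a*a + b*c = - (a*d - b*c + 1) + a * (a + d) + 1 by ring.
  by rewrite hd2 htr; ring.
- have -> : a*b + b*d = b * (a + d) by ring.
  by rewrite htr mulr0.
- have -> : c*a + d*c = c * (a + d) by ring.
  by rewrite htr mulr0.
- have -> : c*b + d*d = - (a*d - b*c + 1) + d * (a + d) + 1 by ring.
  by rewrite hd2 htr; ring.
Qed.
End Fwd.

Definition mk2 (x y z w : F) : 'M[F]_2 :=
  \matrix_(i, j) (if i == o0 then (if j == o0 then x else y) else (if j == o0 then z else w)).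

Lemma mk2E x y z w : [/\ mk2 x y z w o0 o0 = x, mk2 x y z w o0 o1 = y,
   mk2 x y z w o1 o0 = z & mk2 x y z w o1 o1 = w].
Proof. by rewrite !mxE. Qed.

Section Bwd.
Variables M : 'M[F]_2.
Local Notation a := (M o0 o0). Local Notation b := (M o0 o1).
Local Notation c := (M o1 o0). Local Notation d := (M o1 o1).

Lemma bwd : \det M = 1 -> exists G : 'M[F]_2,
  [/\ \det G != 0, M *m G *m M = G & G *m G = 1%:M].
Proof.
move=> hdet.
have m1 : (-1 : F) != 0 by rewrite oppr_eq0 oner_eq0.
have [hc|hc] := eqVneq c 0; last first.
  have hb : b = (a*d-1)/c by rewrite -hdet det2; (field; rewrite ?ha ?hb ?hc //).
  exists (mk2 1 ((d-a)/c) 0 (-1)); split.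
  - by rewrite det2; case: (mk2E 1 ((d-a)/c) 0 (-1)) => -> -> -> ->; rewrite mulr0 subr0 mul1r.
  - apply: eq2; rewrite !mul2E; case: (mk2E 1 ((d-a)/c) 0 (-1)) => -> -> -> ->;
      rewrite ?hb; (field; rewrite ?ha ?hb ?hc //).
  - apply: eq2; rewrite !mul2E !mxE /=; (field; rewrite ?ha ?hb ?hc //).
have ha : a != 0.
  by apply/negP => /eqP ha; move: hdet; rewrite det2 ha hc !mul0r mulr0 subr0 => /eqP; rewrite eq_sym oner_eq0.
have hd : d = a^-1.
  by move: hdet; rewrite det2 hc mulr0 subr0 => h; rewrite -[d](mulKf ha) h mulr1.
have [hb|hb] := eqVneq b 0; last first.
  exists (mk2 1 0 ((d-a)/b) (-1)); split.
  - by rewrite det2; case: (mk2E 1 0 ((d-a)/b) (-1)) => -> -> -> ->; rewrite mul0r subr0 mul1r.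
  - apply: eq2; rewrite !mul2E; case: (mk2E 1 0 ((d-a)/b) (-1)) => -> -> -> ->;
      rewrite ?hc ?hd; (field; rewrite ?ha ?hb ?hc //).
  - apply: eq2; rewrite !mul2E !mxE /=; (field; rewrite ?ha ?hb ?hc //).
exists (mk2 0 1 1 0); split.
- by rewrite det2; case: (mk2E 0 1 1 0) => -> -> -> ->; rewrite mul0r sub0r mul1r.
- apply: eq2; rewrite !mul2E; case: (mk2E 0 1 1 0) => -> -> -> ->;
    rewrite ?hc ?hb ?hd; (field; rewrite ?ha ?hb ?hc //).
- apply: eq2; rewrite !mul2E !mxE /=; (field; rewrite ?ha ?hb ?hc //).
Qed.
End Bwd.
End M2.

Definition mkGL p (A : 'M['F_p]_2) (hA : A \is a GRing.unit) : {'GL_2['F_p]} :=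
  FinRing.Unit hA.

Theorem theorem4p4 (p : nat) (p_pr : prime p) (M : {'GL_2['F_p]}) :
  (reversible M <-> (M ^+ 2 = 1 \/ (\det (GLval M) = 1)%R))
  /\ (M ^+ 2 = 1 -> revsymgrp M = symgrp M)
  /\ ((\det (GLval M) = 1)%R -> M ^+ 2 != 1 ->
      exists G : {'GL_2['F_p]},
        [/\ reversor M G, G ^+ 2 = 1, #[G] = 2%N
          & symgrp M ><| <[G]> = revsymgrp M]).
Proof.
have unitG : forall A : 'M['F_p]_2, (\det A != 0)%R -> A \is a GRing.unit.
  by move=> A hA; rewrite unitmxE GRing.unitfE.
have sq : M ^+ 2 = 1 <-> (GLval M *m GLval M = 1%:M)%R.
  rewrite expg2; split=> h; first exact: (congr1 (@GLval 2 _) h).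
  by apply: val_inj; exact: h.
have revM : forall G, reversor M G <-> (GLval M *m GLval G *m GLval M = GLval G)%R.
  move=> G; rewrite revE; split=> h; first exact: (congr1 (@GLval 2 _) h).
  by apply: val_inj; exact: h.
split; [split|split].
- case=> G /revM h; have [h2|h2] := fwd (GL_det G) h; [left; exact/sq | by right].
- case=> [h2|h2].
    exists 1; rewrite /reversor mul1g invg1 mulg1; apply/eqP.
    by rewrite eq_sym eq_invg_mul -expg2 h2.
  have [G [hG h1 h2']] := bwd h2.
  by exists (mkGL (unitG _ hG)); apply/revM; exact: h1.
- move=> h2; apply/setP => H; rewrite !inE.
  have MV : M^-1 = M by apply/eqP; rewrite eq_invg_mul -expg2 h2.
  by rewrite MV orbb.
move=> hd hM2; have [G [hG h1 h2']] := bwd hd.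
pose Gg := mkGL (unitG _ hG).
have hr : reversor M Gg by apply/revM; exact: h1.
have hG2 : Gg ^+ 2 = 1 by rewrite expg2; apply: val_inj; exact: h2'.
exists Gg; split => //; last exact: revgrp.
have hn1 : Gg != 1.
  apply/eqP => e; move: hr; rewrite e revE mulg1 => h.
  by case/eqP: hM2; rewrite expg2.
have d2 : #[Gg] %| 2 by rewrite order_dvdn hG2.
have g1 : 1 < #[Gg] by rewrite order_gt1.
move: g1 (dvdn_leq (erefl true : 0 < 2) d2); case: #[Gg] => [|[|[|n]]] //.
Qed.
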